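(* Let $d_n$ denote the number of derangements of $n$ elements (permutations of $\{1,\dots,n\}$ with no fixed points). Then the sequence $\{d_n\}_{n\ge 3}$ is asymptotically infinitely log-monotonic: for every integer $k\ge 0$ there exists $N\ge 3$ such that $\{d_n\}_{n\ge N}$ is log-monotonic of order $k$.
   Context: For a sequence $\{z_n\}$ of positive numbers, define the operator $R\{z_n\}=\{z_{n+1}/z_n\}$. A sequence of positive numbers $\{x_n\}$ is log-convex if $x_{n-1}x_{n+1}\ge x_n^2$ and log-concave if $x_{n-1}x_{n+1}\le x_n^2$, for all indices where these terms are defined. A sequence $\{z_n\}$ is log-monotonic of order $k$ if for every odd $r\le k-1$ the sequence $R^r\{z_n\}$ is log-concave and for every even $r\le k-1$ (including $r=0$) the sequence $R^r\{z_n\}$ is log-convex. *)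

(* Defs.v *)
From mathcomp Require Import all_boot all_order all_algebra all_fingroup.
Set Implicit Arguments. Unset Strict Implicit. Unset Printing Implicit Defensive.
Import Order.TTheory GRing.Theory Num.Theory.
Local Open Scope ring_scope.

Definition derangement_number (n : nat) : nat :=
  #|[set s : 'S_n | [forall i, s i != i]]|.

Definition ratio_op (R : realFieldType) (z : nat -> R) : nat -> R :=
  fun n => z n.+1 / z n.

Definition log_convex (R : realFieldType) (x : nat -> R) : Prop :=
  forall n : nat, x n.+1 ^+ 2 <= x n * x n.+2.

Definition log_concave (R : realFieldType) (x : nat -> R) : Prop :=
  forall n : nat, x n * x n.+2 <= x n.+1 ^+ 2.

Definition log_monotonic_of_order (R : realFieldType) (k : nat) (z : nat -> R) : Prop :=
  forall r : nat, (r < k)%N ->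
    (odd r -> log_concave (iter r (@ratio_op R) z)) /\
    (~~ odd r -> log_convex (iter r (@ratio_op R) z)).

(* Main.v *)
From Stdlib Require Import Reals Lra Lia.
Require Import Defs.
From mathcomp Require Import all_boot all_order all_algebra all_fingroup.
From mathcomp Require Import zify.
From mathcomp Require Import Rstruct.
Set Warnings "-notation-overridden,-ambiguous-paths".
Open Scope R_scope.

Definition Dr (f : R -> R) : R -> R := fun y => f (y + 1) - f y.
Fixpoint Drm (m : nat) (f : R -> R) : R -> R :=
  match m with O => f | S m' => Dr (Drm m' f) end.
Definition phi (p : nat) (y : R) : R := / (y ^ p).

Lemma Drm_scal m a f y : Drm m (fun t => a * f t) y = a * Drm m f y.
Proof.
revert y; induction m as [|m IH]; intros y; simpl; [reflexivity|].
unfold Dr; rewrite !IH; ring.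
Qed.

Lemma dshift g l y : derivable_pt_lim g (y + 1) l ->
  derivable_pt_lim (fun t => g (t + 1)) y l.
Proof.
intros H eps he; destruct (H eps he) as [d Hd]; exists d; intros h hn hd.
replace (y + h + 1) with (y + 1 + h) by ring; apply Hd; assumption.
Qed.

Lemma Drm_deriv m f f' :
  (forall y, 0 < y -> derivable_pt_lim f y (f' y)) ->
  forall y, 0 < y -> derivable_pt_lim (Drm m f) y (Drm m f' y).
Proof.
intros Hf; induction m as [|m IH]; intros y hy; simpl; [apply Hf; exact hy|].
unfold Dr.
apply (derivable_pt_lim_minus (fun t => Drm m f (t + 1)) (Drm m f)).
- apply dshift; apply IH; lra.
- apply IH; exact hy.
Qed.

Lemma Drm_MVT m f f' y :
  (forall y, 0 < y -> derivable_pt_lim f y (f' y)) -> 0 < y ->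
  exists xi, y < xi < y + 1 /\ Drm (S m) f y = Drm m f' xi.
Proof.
intros Hf hy.
destruct (MVT_cor2 (Drm m f) (Drm m f') y (y + 1)) as [c [Hc1 Hc2]].
- lra.
- intros c hc; apply Drm_deriv; [exact Hf | lra].
- exists c; split; [exact Hc2|]. simpl; unfold Dr; rewrite Hc1; ring.
Qed.

Lemma phi_deriv p y : 0 < y -> derivable_pt_lim (phi p) y (- INR p * phi (S p) y).
Proof.
intros hy.
have H := derivable_pt_lim_div (fct_cte 1) (fun t => t ^ p) y 0 (INR p * y ^ Init.Nat.pred p)
  (derivable_pt_lim_const 1 y) (derivable_pt_lim_pow y p).
have hp : y ^ p <> 0 by apply pow_nonzero; lra.
specialize (H hp).
apply (derivable_pt_lim_ext (fun t => (fct_cte 1 / (fun t => t ^ p))%F t)).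
- intros z; unfold phi, div_fct, fct_cte; unfold Rdiv; ring.
- replace (- INR p * phi (S p) y) with
   ((0 * (fun t : R => t ^ p) y - INR p * y ^ Init.Nat.pred p * fct_cte 1 y) /
        Rsqr ((fun t : R => t ^ p) y)); [exact H|].
  unfold phi, fct_cte, Rsqr; clear H; case: p hp => [|q] hp.
  + simpl; field; lra.
  + have hq : y ^ q <> 0 by apply pow_nonzero; lra.
    simpl Init.Nat.pred; simpl pow. field; split; lra.
Qed.

Lemma inv_pow_le a b q : 0 < a -> a <= b -> / b ^ q <= / a ^ q.
Proof.
intros ha hab; apply Rinv_le_contravar.
- apply pow_lt; exact ha.
- apply pow_incr; lra.
Qed.

Lemma phi_bound m : forall p, exists c, 0 < c /\ forall y, 0 < y ->
  c / (y + INR m) ^ (S p + m) <= (-1) ^ m * Drm m (phi (S p)) y.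
Proof.
induction m as [|m IH]; intros p.
- exists 1; split; [lra|]; intros y hy; simpl Drm; unfold phi.
  rewrite addn0; simpl INR; rewrite Rplus_0_r; simpl pow at 2; lra.
- destruct (IH (S p)) as [c [hc Hc]].
  exists (INR (S p) * c); split.
  { apply Rmult_lt_0_compat; [apply lt_0_INR; lia | exact hc]. }
  intros y hy.
  destruct (Drm_MVT m (phi (S p)) (fun t => - INR (S p) * phi (S (S p)) t) y)
    as [xi [hxi Heq]].
  { intros z hz; apply phi_deriv; exact hz. }
  { exact hy. }
  rewrite Heq Drm_scal.
  have h1 := Hc xi ltac:(lra).
  have hm := pos_INR m.
  have h2 : / (y + INR (S m)) ^ (S p + S m) <= / (xi + INR m) ^ (S (S p) + m).
  { replace (S p + S m)%nat with (S (S p) + m)%nat by lia.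
    apply inv_pow_le; [lra|]. rewrite S_INR; lra. }
  have hSp : 0 < INR (S p) by apply lt_0_INR; lia.
  replace ((-1) ^ S m * (- INR (S p) * Drm m (phi (S (S p))) xi))
    with (INR (S p) * ((-1) ^ m * Drm m (phi (S (S p))) xi)) by (simpl; ring).
  unfold Rdiv in *. rewrite Rmult_assoc.
  apply Rmult_le_compat_l; [lra|].
  apply Rle_trans with (c * / (xi + INR m) ^ (S (S p) + m)); [|exact h1].
  apply Rmult_le_compat_l; lra.
Qed.

Lemma ln_bound m : exists c, 0 < c /\ forall y, 0 < y ->
  c / (y + INR (S m)) ^ (S m) <= (-1) ^ (S (S m)) * Drm (S m) ln y.
Proof.
destruct (phi_bound m 0) as [c [hc Hc]].
exists c; split; [exact hc|]; intros y hy.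
destruct (Drm_MVT m ln (phi 1) y) as [xi [hxi Heq]].
{ intros z hz. replace (phi 1 z) with (/ z) by (unfold phi; simpl; f_equal; ring).
  apply derivable_pt_lim_ln; exact hz. }
{ exact hy. }
rewrite Heq.
replace ((-1) ^ S (S m) * Drm m (phi 1) xi) with ((-1) ^ m * Drm m (phi 1) xi) by (simpl; ring).
apply Rle_trans with (c / (xi + INR m) ^ (1 + m)); [|apply Hc; lra].
have hm := pos_INR m.
unfold Rdiv; apply Rmult_le_compat_l; [lra|].
apply inv_pow_le; [lra|]; rewrite S_INR; lra.
Qed.

Fixpoint Dnm (m : nat) (f : nat -> R) : nat -> R :=
  match m with O => f | S m' => fun n => Dnm m' f (S n) - Dnm m' f n end.

Lemma Dnm_Drm m g a x : Dnm m (fun n => g (INR n + a)) x = Drm m g (INR x + a).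
Proof.
revert x; induction m as [|m IH]; intros x; simpl; [reflexivity|].
unfold Dr; rewrite !IH S_INR; f_equal; f_equal; ring.
Qed.

Lemma Dnm_ext m f g : (forall n, f n = g n) -> forall x, Dnm m f x = Dnm m g x.
Proof.
intros H; induction m as [|m IH]; intros x; simpl; [apply H|].
rewrite !IH; reflexivity.
Qed.

Lemma Dnm_add m f g x : Dnm m (fun n => f n + g n) x = Dnm m f x + Dnm m g x.
Proof.
revert x; induction m as [|m IH]; intros x; simpl; [reflexivity|].
rewrite !IH; ring.
Qed.

Lemma Dnm_shift m f N x : Dnm m (fun n => f (n + N)%N) x = Dnm m f (x + N)%N.
Proof.
revert x; induction m as [|m IH]; intros x; simpl; [reflexivity|].
rewrite !IH; reflexivity.
Qed.

Lemma Dnm_swap m f n : Dnm m (fun k => f (S k) - f k) n = Dnm (S m) f n.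
Proof.
revert n; induction m as [|m IH]; intros n; simpl; [reflexivity|].
rewrite !IH; reflexivity.
Qed.

Lemma Dnm_bound m eta beta x0 :
  (forall x, (x0 <= x)%N -> Rabs (eta x) <= beta x) ->
  (forall x, (x0 <= x)%N -> beta (S x) <= beta x) ->
  forall x, (x0 <= x)%N -> Rabs (Dnm m eta x) <= 2 ^ m * beta x.
Proof.
intros He Hb; induction m as [|m IH]; intros x hx; simpl.
- rewrite Rmult_1_l; apply He; exact hx.
- have h1 := IH (S x) ltac:(lia).
  have h2 := IH x hx.
  have h3 := Hb x hx.
  have hp : 0 < 2 ^ m by apply pow_lt; lra.
  apply Rle_trans with (Rabs (Dnm m eta (S x)) + Rabs (Dnm m eta x)).
  { unfold Rminus; apply Rle_trans with (Rabs (Dnm m eta (S x)) + Rabs (- Dnm m eta x));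
      [apply Rabs_triang | rewrite Rabs_Ropp; lra]. }
  nra.
Qed.

Lemma pow2_ge i : INR i <= 2 ^ i.
Proof.
induction i as [|i IH]; [simpl; lra|].
rewrite S_INR. have := pow_R1_Rle 2 i ltac:(lra). simpl pow. lra.
Qed.

Lemma pow_m1_bound k : -1 <= (-1) ^ k <= 1.
Proof. induction k as [|k IH]; simpl; lra. Qed.

Lemma ln_le x : 0 < x -> ln x <= x - 1.
Proof. intros hx; have h := exp_ineq1_le (ln x); rewrite exp_ln in h; lra. Qed.

Lemma ln_div' u v : 0 < u -> 0 < v -> ln (u / v) = ln u - ln v.
Proof.
intros hu hv; unfold Rdiv; rewrite ln_mult.
- rewrite ln_Rinv; [ring | exact hv].
- exact hu.
- apply Rinv_0_lt_compat; exact hv.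
Qed.

Section Deranged.
Variable d : nat -> nat.
Hypothesis Hd2 : d 2 = 1%N.
Hypothesis Hrec : forall n, INR (d (S n)) = INR (S n) * INR (d n) + (-1) ^ (S n).

Lemma d_ge1 n : (2 <= n)%N -> 1 <= INR (d n).
Proof.
intros hn.
have E : forall j, 1 <= INR (d (j + 2)%N).
{ induction j as [|j IH].
  - rewrite add0n Hd2; simpl; lra.
  - change (j.+1 + 2)%N with (S (j + 2)).
    rewrite Hrec S_INR.
    have : 2 <= INR (j + 2) by (change 2 with (INR 2); apply le_INR; lia).
    have ? := pow_m1_bound (S (j + 2)). nra. }
have -> : n = ((n - 2) + 2)%N by lia.
apply E.
Qed.

Lemma d_pos n : (2 <= n)%N -> 0 < INR (d n).
Proof. intros hn; have ? := d_ge1 n hn; lra. Qed.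

Lemma d_grow n : (2 <= n)%N -> INR n * INR (d n) <= INR (d (S n)) /\ INR (d n) <= INR (d (S n)).
Proof.
intros hn; have h1 := d_ge1 n hn; rewrite Hrec S_INR.
have ? := pow_m1_bound (S n).
have hn' : 2 <= INR n by (change 2 with (INR 2); apply le_INR; lia).
split; nra.
Qed.

Lemma eta_bound n : (2 <= n)%N ->
  Rabs (ln (INR (d (S n))) - ln (INR (d n)) - ln (INR n + 1)) <= / INR (d n).
Proof.
intros hn.
have h1 := d_ge1 n hn.
have [hg1 hg2] := d_grow n hn.
have hn0 := pos_INR n.
set a := (INR n + 1) * INR (d n).
set b := INR (d (S n)).
have ha : 0 < a by unfold a; nra.
have hb : 0 < b by unfold b; lra.
have Eb : b = a + (-1) ^ (S n) by unfold a, b; rewrite Hrec S_INR; ring.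
have hs := pow_m1_bound (S n).
have -> : ln b - ln (INR (d n)) - ln (INR n + 1) = ln b - ln a.
{ unfold a; rewrite ln_mult; [ring | lra | lra]. }
have u1 : ln b - ln a <= / INR (d n).
{ have H := ln_le (b / a) ltac:(apply Rdiv_lt_0_compat; lra).
  rewrite ln_div' in H; try lra. apply Rle_trans with (b / a - 1); [exact H|].
  rewrite Eb. replace ((a + (-1) ^ S n) / a - 1) with ((-1) ^ S n / a) by (field; lra).
  apply Rle_trans with (1 / a). { unfold Rdiv; apply Rmult_le_compat_r; [apply Rlt_le, Rinv_0_lt_compat; lra | lra]. }
  unfold Rdiv; rewrite Rmult_1_l; apply Rinv_le_contravar; [lra|]. unfold a; nra. }
have u2 : ln a - ln b <= / INR (d n).
{ have H := ln_le (a / b) ltac:(apply Rdiv_lt_0_compat; lra).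
  rewrite ln_div' in H; try lra. apply Rle_trans with (a / b - 1); [exact H|].
  replace (a / b - 1) with ((a - b) / b) by (field; lra).
  rewrite {1}Eb. replace (a - (a + (-1) ^ S n)) with (- (-1) ^ S n) by ring.
  apply Rle_trans with (1 / b). { unfold Rdiv; apply Rmult_le_compat_r; [apply Rlt_le, Rinv_0_lt_compat; lra | lra]. }
  unfold Rdiv; rewrite Rmult_1_l; apply Rinv_le_contravar; [lra|]. unfold b; lra. }
apply Rabs_le; lra.
Qed.

Lemma d_growth K A q : 0 < A -> exists M, forall x, (M <= x)%N -> K * (INR x + A) ^ q < INR (d x).
Proof.
intros hA.
destruct (INR_unbounded (2 ^ (S q))) as [n0 hn0].
set X0 := (n0 + 2)%N.
have hX0' : INR n0 <= INR X0 by (apply le_INR; unfold X0; lia).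
have hX0 : 2 ^ (S q) <= INR X0 by lra.
have hX02 : (2 <= X0)%N by unfold X0; lia.
set P := fun x => (INR x + A) ^ q.
have Ppos : forall x, 0 < P x.
{ intros x; unfold P; apply pow_lt. have ? := pos_INR x. lra. }
set Q := fun x => INR (d x) / P x.
have step : forall x, (X0 <= x)%N -> 2 * Q x <= Q (S x).
{ intros x hx.
  have hx2 : (2 <= x)%N by lia.
  have [g1 _] := d_grow x hx2.
  have hdx := d_pos x hx2.
  have hxX : INR X0 <= INR x by apply le_INR; lia.
  have hx1 : 2 <= INR x by (change 2 with (INR 2); apply le_INR; lia).
  have hP : P (S x) <= 2 ^ q * P x.
  { unfold P; rewrite -Rpow_mult_distr; apply pow_incr; rewrite S_INR; lra. }
  have h2q : 0 < 2 ^ q by apply pow_lt; lra.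
  have hPx := Ppos x. have hPSx := Ppos (S x).
  have hdS : 2 * 2 ^ q * INR (d x) <= INR (d (S x)).
  { apply Rle_trans with (INR x * INR (d x)); [|exact g1].
    apply Rmult_le_compat_r; [lra|]. simpl in hX0; lra. }
  unfold Q. apply Rle_trans with (2 * 2 ^ q * INR (d x) / (2 ^ q * P x)).
  { right; field; lra. }
  unfold Rdiv; apply Rle_trans with (INR (d (S x)) * / (2 ^ q * P x)).
  { apply Rmult_le_compat_r; [apply Rlt_le, Rinv_0_lt_compat; nra | exact hdS]. }
  apply Rmult_le_compat_l; [have ? := pos_INR (d (S x)); lra|].
  apply Rinv_le_contravar; [exact hPSx | exact hP]. }
have iter : forall i, INR i * Q X0 <= Q (X0 + i)%N.
{ have hQ0 : 0 < Q X0 by (unfold Q; apply Rdiv_lt_0_compat; [apply d_pos; exact hX02 | apply Ppos]).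
  have gen : forall i, 2 ^ i * Q X0 <= Q (X0 + i)%N.
  { induction i as [|i IH]; [rewrite addn0; simpl; lra|].
    have ? := step (X0 + i)%N ltac:(lia). rewrite addnS. simpl pow. lra. }
  intros i; apply Rle_trans with (2 ^ i * Q X0); [|apply gen].
  apply Rmult_le_compat_r; [lra | apply pow2_ge]. }
have hQ0 : 0 < Q X0 by (unfold Q; apply Rdiv_lt_0_compat; [apply d_pos; exact hX02 | apply Ppos]).
destruct (INR_unbounded (K / Q X0)) as [j hj].
exists (X0 + j)%N; intros x hx.
have E : x = (X0 + (x - X0))%N by lia.
have h1 := iter (x - X0)%N. rewrite -E in h1.
have h2 : INR j <= INR (x - X0) by apply le_INR; lia.
have h3 : K < Q x.
{ apply Rlt_le_trans with (INR j * Q X0); [|nra].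
  apply (Rmult_lt_compat_r (Q X0)) in hj; [|exact hQ0].
  unfold Rdiv in hj; rewrite Rmult_assoc Rinv_l in hj; lra. }
have hPx := Ppos x.
unfold Q in h3. change ((INR x + A) ^ q) with (P x).
apply (Rmult_lt_compat_r (P x)) in h3; [|exact hPx].
unfold Rdiv in h3; rewrite Rmult_assoc Rinv_l in h3; lra.
Qed.

Theorem key m : exists M, forall x, (M <= x)%N ->
  0 < (-1) ^ (S (S m)) * Dnm (S m) (fun x => ln (INR (d (S x))) - ln (INR (d x))) x.
Proof.
destruct (ln_bound m) as [c [hc Hc]].
destruct (d_growth (2 ^ (S m) / c) (1 + INR (S m)) (S m)) as [M1 HM1].
{ have ? := pos_INR (S m); lra. }
exists (M1 + 2)%N; intros x hx.
set eta := fun n => ln (INR (d (S n))) - ln (INR (d n)) - ln (INR n + 1).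
rewrite (Dnm_ext (S m) _ (fun n => ln (INR n + 1) + eta n)); last first.
{ intros n; unfold eta; ring. }
rewrite Dnm_add (Dnm_Drm (S m) ln 1 x).
have h1 := Hc (INR x + 1) ltac:(have ? := pos_INR x; lra).
have h2 := Dnm_bound (S m) eta (fun n => / INR (d n)) 2
  (fun n hn => eta_bound n hn)
  (fun n hn => ltac:(apply Rinv_le_contravar; [apply d_pos; exact hn | apply (d_grow n hn)]))
  x ltac:(lia).
have h3 := HM1 x ltac:(lia).
have hdx := d_pos x ltac:(lia).
set s := (-1) ^ S (S m).
have hs : Rabs s = 1 by (unfold s; apply pow_1_abs).
set P := (INR x + 1 + INR (S m)) ^ S m.
have hP : 0 < P by (unfold P; apply pow_lt; have ? := pos_INR x; have ? := pos_INR (S m); lra).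
rewrite -Rplus_assoc in h3. fold P in h3, h1.
have h4 : s * Dnm (S m) eta x >= - (2 ^ S m * / INR (d x)).
{ have : Rabs (s * Dnm (S m) eta x) <= 2 ^ S m * / INR (d x) by rewrite Rabs_mult hs Rmult_1_l.
  intros H; have h := Rle_abs (- (s * Dnm (S m) eta x)); rewrite Rabs_Ropp in h; lra. }
have h5 : 2 ^ S m * / INR (d x) < c / P.
{ have h6 : 2 ^ S m * P < c * INR (d x).
  { unfold Rdiv in h3. apply (Rmult_lt_compat_l c) in h3; [|exact hc].
    replace (c * (2 ^ S m * / c * P)) with (2 ^ S m * P) in h3 by (field; lra). exact h3. }
  apply (Rmult_lt_reg_r (P * INR (d x))); [nra|].
  replace (2 ^ S m * / INR (d x) * (P * INR (d x))) with (2 ^ S m * P) by (field; lra).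
  replace (c / P * (P * INR (d x))) with (c * INR (d x)) by (field; lra). exact h6. }
rewrite Rmult_plus_distr_l. fold s in h1. lra.
Qed.

End Deranged.

Close Scope R_scope.

Definition PG {n} k (s : 'S_n) : bool := [forall i : 'I_n, (i < k) ==> (s i != i)].
Definition G n k := #|[set s : 'S_n | PG k s]|.

Lemma G0 n : G n 0 = n`!.
Proof.
rewrite /G -card_Sn; apply: eq_card => s; rewrite inE /PG.
by apply/forallP => i.
Qed.

Lemma Gnn n : derangement_number n = G n n.
Proof.
rewrite /derangement_number /G; apply: eq_card => s; rewrite !inE /PG.
apply/forallP/forallP => H i; first by rewrite ltn_ord H.
by have := H i; rewrite ltn_ord.
Qed.

Lemma G_rec m k : (k <= m)%N -> G m.+1 k = (G m.+1 k.+1 + G m k)%N.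
Proof.
move=> km.
set i0 : 'I_m.+1 := inord k.
have vi0 : nat_of_ord i0 = k by rewrite /i0 inordK.
rewrite /G -!sum1_card.
rewrite (bigID (fun s : 'S_m.+1 => s i0 == i0)) /= addnC.
congr (_ + _)%N.
- apply: eq_bigl => s; rewrite !inE /PG.
  apply/idP/idP.
  + case/andP => /forallP H1 H2; apply/forallP => j; apply/implyP => hj.
    case: (ltngtP j k) => hjk.
    * by have := H1 j; rewrite hjk.
    * by move: hj; rewrite ltnS leqNgt hjk.
    * by have -> : j = i0 by apply: ord_inj; rewrite vi0.
  + move/forallP => H; apply/andP; split.
    * apply/forallP => j; apply/implyP => hj; have := H j.
      by rewrite (ltn_trans hj (ltnSn k)).
    * by have := H i0; rewrite vi0 ltnSn.
- rewrite (reindex (lift_perm i0 i0)) /=; last first.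
    pose ulsf i (s : 'S_m.+1) kk := odflt kk (unlift (s i) (s (lift i kk))).
    have ulsfK i (s : 'S_m.+1) kk: lift (s i) (ulsf i s kk) = s (lift i kk).
      rewrite /ulsf; have:= neq_lift i kk.
      by rewrite -(can_eq (permK s)) => /unlift_some[] ? ? ->.
    have inj_ulsf: injective (ulsf i0 _).
      move=> s; apply: can_inj (ulsf (s i0) s^-1%g) _ => k'.
      by rewrite {1}/ulsf ulsfK !permK liftK.
    exists (fun s => perm (inj_ulsf s)) => [s _ | s].
      by apply/permP=> k'; rewrite permE /ulsf lift_perm_lift lift_perm_id liftK.
    case/andP => _ /eqP si0; apply/permP=> k'.
    case: (unliftP i0 k') => [k''|] ->; rewrite ?lift_perm_id //.
    by rewrite lift_perm_lift permE; move: (ulsfK i0 s k''); rewrite si0.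
  apply: eq_bigl => t; rewrite !inE lift_perm_id eqxx andbT /PG.
  apply/forallP/forallP => H j; apply/implyP => hj.
  + have hl : nat_of_ord (lift i0 j) = j by rewrite /= /bump vi0 leqNgt hj.
    have := H (lift i0 j); rewrite hl hj /= lift_perm_lift.
    by rewrite (inj_eq (@lift_inj _ i0)).
  + case: (unliftP i0 j) => [j'|] hjj.
    * subst j.
      have hj' : (j' < k)%N.
        move: hj; rewrite /= /bump vi0; case: leqP => h /=; rewrite ?add1n ?add0n => h2; lia.
      have := H j'; rewrite hj' /= => Hj.
      by rewrite lift_perm_lift (inj_eq (@lift_inj _ i0)).
    * by move: hj; rewrite hjj vi0 ltnn.
Qed.

Import GRing.Theory Num.Theory.
Section Closed.
Local Open Scope ring_scope.

Definition Sg (n k : nat) : int :=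
  \sum_(i < k.+1) (-1) ^+ i * ('C(k, i) * (n - i)`!)%:R.

Lemma Sg_rec m k : Sg m.+1 k.+1 = Sg m.+1 k - Sg m k.
Proof.
rewrite /Sg.
set f := fun i : nat => (-1) ^+ i * ('C(k, i.+1) * (m - i)`!)%:R : int.
set g := fun i : nat => (-1) ^+ i * ('C(k, i) * (m - i)`!)%:R : int.
have L : \sum_(i < k.+2) (-1) ^+ i * ('C(k.+1, i) * (m.+1 - i)`!)%:R
   = ((m.+1)`!)%:R - \sum_(i < k.+1) f i - \sum_(i < k.+1) g i :> int.
{ rewrite big_ord_recl /= expr0 mul1r bin0 subn0 mul1n -addrA; congr (_ + _).
  rewrite -opprD -big_split /= -sumrN; apply: eq_bigr => i _.
  rewrite (_ : bump 0 i = i.+1) // binS subSS mulnDl natrD /f /g exprS mulN1r.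
  by rewrite mulNr mulrDr. }
have R1 : \sum_(i < k.+1) (-1) ^+ i * ('C(k, i) * (m.+1 - i)`!)%:R
   = ((m.+1)`!)%:R - \sum_(i < k) f i :> int.
{ rewrite big_ord_recl /= expr0 mul1r bin0 subn0 mul1n; congr (_ + _).
  rewrite -sumrN; apply: eq_bigr => i _.
  by rewrite (_ : bump 0 i = i.+1) // subSS /f exprS mulN1r mulNr. }
have F1 : \sum_(i < k.+1) f i = \sum_(i < k) f i.
{ by rewrite big_ord_recr /= /f bin_small // mul0n mulr0 addr0. }
rewrite L R1 F1 /g. 
by [].
Qed.

Lemma G_closed k : forall n, (k <= n)%N -> (G n k)%:R = Sg n k :> int.
Proof.
elim: k => [|k IH] n hkn.
- by rewrite G0 /Sg big_ord1 /= expr0 mul1r bin0 mul1n subn0.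
- case: n hkn => [|m] // hkm.
  have h := G_rec m k hkm.
  have -> : (G m.+1 k.+1)%:R = (G m.+1 k)%:R - (G m k)%:R :> int
    by rewrite h natrD addrK.
  rewrite IH ?IH //; last by apply: ltnW.
  by rewrite Sg_rec.
Qed.

Lemma d_rec n : (derangement_number n.+1)%:R =
   (n.+1 * derangement_number n)%:R + (-1) ^+ n.+1 :> int.
Proof.
rewrite !Gnn natrM (G_closed n.+1 n.+1) // (G_closed n n) // /Sg big_ord_recr /= subnn binn mul1n mulr1.
congr (_ + _).
rewrite big_distrr /=; apply: eq_bigr => i _.
have hi : (i <= n)%N by rewrite -ltnS.
rewrite mulrCA; congr (_ * _); rewrite -natrM; congr (_%:R).
apply/eqP; rewrite -(eqn_pmul2r (fact_gt0 i)).
rewrite -!mulnA [((n.+1 - i)`! * _)%N]mulnC [((n - i)`! * _)%N]mulnC.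
rewrite bin_fact; last by apply: (leq_trans hi).
by rewrite bin_fact // factS.
Qed.

End Closed.

Section NatRec.
Local Open Scope ring_scope.
Lemma d_rec_nat n : if odd n.+1 then (derangement_number n.+1).+1 = (n.+1 * derangement_number n)%N
  else derangement_number n.+1 = (n.+1 * derangement_number n).+1.
Proof.
have E := d_rec n.
rewrite -signr_odd in E.
case Ho : (odd n.+1) in E *.
- have E2 : ((derangement_number n.+1).+1)%:R = (n.+1 * derangement_number n)%:R :> int.
  { by rewrite -natr1 E expr1 addrNK. }
  by move/eqP: E2; rewrite eqr_nat => /eqP E2.
- have E2 : (derangement_number n.+1)%:R = ((n.+1 * derangement_number n).+1)%:R :> int.
  { by rewrite E expr0 natr1. }
  by move/eqP: E2; rewrite eqr_nat => /eqP E2.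
Qed.

Lemma d0 : derangement_number 0 = 1%N.
Proof.
apply/eqP; rewrite -(eqr_nat int) Gnn (G_closed 0 0) // /Sg big_ord1 /=.
by rewrite expr0 mul1r.
Qed.
End NatRec.

Lemma d2 : derangement_number 2 = 1%N.
Proof.
have E1 := d_rec_nat 0. have E2 := d_rec_nat 1. rewrite /= d0 in E1 E2.
simpl in E1, E2. lia.
Qed.

Open Scope R_scope.

Lemma powm1_odd k : (-1) ^ k = (if odd k then -1 else 1).
Proof.
induction k as [|k IH]; [reflexivity|].
simpl pow; rewrite IH /=; case: (odd k) => /=; lra.
Qed.

Lemma d_rec_R n : INR (derangement_number n.+1) =
  INR n.+1 * INR (derangement_number n) + (-1) ^ n.+1.
Proof.
have E := d_rec_nat n.
rewrite powm1_odd.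
case: (odd n.+1) in E *.
- have E3 := f_equal INR E. rewrite S_INR mult_INR in E3. lra.
- have E3 := f_equal INR E. rewrite S_INR mult_INR in E3. lra.
Qed.

Section Transfer.
Local Open Scope ring_scope.

Lemma iter_ratr (F : realFieldType) (a : nat -> nat) r n :
  iter r (@ratio_op F) (fun m => (a m)%:R) n =
  ratr (iter r (@ratio_op rat) (fun m => (a m)%:R) n).
Proof.
elim: r n => [|r IH] n /=; first by rewrite ratr_nat.
by rewrite /ratio_op !IH rmorphM fmorphV.
Qed.

Lemma convex_transfer (F : realFieldType) (a : nat -> nat) r :
  log_convex (iter r (@ratio_op Rdefinitions.R) (fun m => (a m)%:R)) ->
  log_convex (iter r (@ratio_op F) (fun m => (a m)%:R)).
Proof.
move=> H n; have := H n.
rewrite !(iter_ratr Rdefinitions.R) !(iter_ratr F).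
rewrite -!rmorphXn -!rmorphM !ler_rat. done.
Qed.

Lemma concave_transfer (F : realFieldType) (a : nat -> nat) r :
  log_concave (iter r (@ratio_op Rdefinitions.R) (fun m => (a m)%:R)) ->
  log_concave (iter r (@ratio_op F) (fun m => (a m)%:R)).
Proof.
move=> H n; have := H n.
rewrite !(iter_ratr Rdefinitions.R) !(iter_ratr F).
rewrite -!rmorphXn -!rmorphM !ler_rat. done.
Qed.
Definition zR (a : nat -> nat) : nat -> Rdefinitions.R := fun m => (a m)%:R.
End Transfer.


Open Scope R_scope.

Lemma iter_exp (f : nat -> R) : (forall n, 0 < f n) ->
  forall r n, iter r (@ratio_op R) f n = exp (Dnm r (fun m => ln (f m)) n).
Proof.
intros hf r; induction r as [|r IH]; intros n.
- simpl; rewrite exp_ln //.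
- change (iter r.+1 (@ratio_op R) f n) with (ratio_op (iter r (@ratio_op R) f) n).
  rewrite /ratio_op -RdivE !IH. simpl Dnm.
  unfold Rdiv, Rminus; rewrite exp_plus exp_Ropp; reflexivity.
Qed.

Lemma convex_of_Dnm (f : nat -> R) r : (forall n, 0 < f n) ->
  (forall n, 0 < Dnm (S (S r)) (fun m => ln (f m)) n) ->
  log_convex (iter r (@ratio_op R) f).
Proof.
intros hf H n; apply/RleP. rewrite -RpowE -RmultE !iter_exp //.
have h := H n; simpl Dnm in h.
simpl pow; rewrite Rmult_1_r -!exp_plus.
apply Rlt_le, exp_increasing; lra.
Qed.

Lemma concave_of_Dnm (f : nat -> R) r : (forall n, 0 < f n) ->
  (forall n, Dnm (S (S r)) (fun m => ln (f m)) n < 0) ->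
  log_concave (iter r (@ratio_op R) f).
Proof.
intros hf H n; apply/RleP. rewrite -RpowE -RmultE !iter_exp //.
have h := H n; simpl Dnm in h.
simpl pow; rewrite Rmult_1_r -!exp_plus.
apply Rlt_le, exp_increasing; lra.
Qed.

Definition Hd (x : nat) : R :=
  ln (INR (derangement_number (S x))) - ln (INR (derangement_number x)).

Lemma collect k : exists N, forall m, (m < k)%N -> forall x, (N <= x)%N ->
  0 < (-1) ^ (S (S m)) * Dnm (S m) Hd x.
Proof.
induction k as [|k [N IH]].
- exists 0%N; intros m hm; lia.
- destruct (key derangement_number d2 d_rec_R k) as [M HM].
  exists (N + M)%N; intros m hm x hx.
  have [hmk|hmk] : (m < k)%N \/ m = k by lia.
  + apply IH; [exact hmk | lia].
  + subst m; apply HM; lia.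
Qed.

Lemma final_aux k : exists N, (3 <= N)%N /\ forall r, (r < k)%N ->
  (odd r -> log_concave (iter r (@ratio_op R) (zR (fun m => derangement_number (m + N))))) /\
  (~~ odd r -> log_convex (iter r (@ratio_op R) (zR (fun m => derangement_number (m + N))))).
Proof.
destruct (collect k) as [N0 HN].
exists (N0 + 3)%N; split; [lia|].
intros r hr.
set a := fun m => derangement_number (m + (N0 + 3)).
have hpos : forall n, 0 < zR a n.
{ intros n; rewrite /zR -INRE; unfold a; apply (d_pos derangement_number d2 d_rec_R); lia. }
have hD : forall n, Dnm (S (S r)) (fun m => ln (zR a m)) n = Dnm (S r) Hd (n + (N0 + 3)).
{ intros n; rewrite -Dnm_swap -Dnm_shift; apply Dnm_ext; intros j.
  rewrite /zR -!INRE /Hd /a addSn; reflexivity. }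
have hs := HN r hr.
split => ho.
- apply (concave_of_Dnm (zR a)); [exact hpos|].
  intros n; rewrite hD. have h := hs (n + (N0 + 3))%N ltac:(lia).
  have e : odd (S (S r)) = odd r by rewrite /= negbK.
  rewrite powm1_odd e ho in h. lra.
- apply (convex_of_Dnm (zR a)); [exact hpos|].
  intros n; rewrite hD. have h := hs (n + (N0 + 3))%N ltac:(lia).
  have e : odd (S (S r)) = odd r by rewrite /= negbK.
  rewrite powm1_odd e (negbTE ho) in h. lra.
Qed.

Close Scope R_scope.
Local Open Scope ring_scope.

Theorem theorem3p1 (R : realFieldType) :
  forall k : nat, exists N : nat, (3 <= N)%N /\
    log_monotonic_of_order k (fun m : nat => (derangement_number (m + N))%:R : R).
Proof.
intros k.
destruct (final_aux k) as [N [hN H]].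
exists N; split; [exact hN|].
intros r hr; have [h1 h2] := H r hr.
split => ho.
- apply (concave_transfer R (fun m => derangement_number (m + N)) r); apply h1; exact ho.
- apply (convex_transfer R (fun m => derangement_number (m + N)) r); apply h2; exact ho.
Qed.
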